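(* Let $\Omega\subseteq\mathbb{R}^d$ be a convex compact set, and for $t\in\mathbb{R}$ let $\Omega_t=\{x\in\mathbb{R}^{d-1}:(x,t)\in\Omega\}$. Let $\eta>\max_{t\in\mathbb{R}}|\Omega_t|$ and let $\Lambda\subseteq\mathbb{R}^{d-1}$ be an $\eta$-universal sampling set. Then there exist $0<A\le B<\infty$ such that for every $t\in\mathbb{R}$, $\Lambda$ is a set of stable sampling for $\mathcal{B}_{\Omega_t}$ with bounds $A,B$.
   Context: $|\Omega_t|$ is $(d-1)$-dimensional Lebesgue measure. Fourier transform on $\mathbb{R}^n$: $\widehat f(\omega)=\int f(r)e^{-2\pi i\langle\omega,r\rangle}dr$; for closed $S\subseteq\mathbb{R}^n$, $\mathcal{B}_S=\{f\in L^2(\mathbb{R}^n):\widehat f=0\text{ a.e. outside }S\}$. $\Lambda$ is a set of stable sampling for $\mathcal{B}_S$ with bounds $A,B$ if $A\|f\|_2^2\le\sum_{\lambda\in\Lambda}|f(\lambda)|^2\le B\|f\|_2^2$ for all $f\in\mathcal{B}_S$. Beurling densities of $\Lambda\subseteq\mathbb{R}^n$: $D^-(\Lambda)=\liminf_{a\to\infty}\inf_x\#(\Lambda\cap B_a^n(x))/|B_a^n|$, $D^+(\Lambda)=\limsup_{a\to\infty}\sup_x\#(\Lambda\cap B_a^n(x))/|B_a^n|$. Given $\eta>0$, an $\eta$-universal sampling set in $\mathbb{R}^n$ is a set $\Lambda$ with uniform density $D^-(\Lambda)=D^+(\Lambda)=\eta$ that is a set of stable sampling for $\mathcal{B}_S$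 for every compact $S\subseteq\mathbb{R}^n$ with $|S|<\eta$ (the bounds may depend on $S$). *)

(* Defs.v *)
From HB Require Import structures.
From mathcomp Require Import all_boot all_order all_algebra.
From mathcomp Require Import all_classical all_reals all_analysis.

Set Implicit Arguments.
Unset Strict Implicit.
Unset Printing Implicit Defensive.

Import Order.TTheory GRing.Theory Num.Theory.
Import numFieldNormedType.Exports.

Local Open Scope classical_set_scope.
Local Open Scope ring_scope.

Section Defs.
Variable R : realType.

(* Measure theory is done on n.-tuple R, which mathcomp-analysis       *)
(* equips with the product (= Borel) sigma-algebra; the two are        *)
(* identified by the bijection [to_row].                               *)

Definition to_row (n : nat) (x : n.-tuple R) : 'rV[R]_n := \row_i tnth x i.

(* n-dimensional Lebesgue measure on (Borel sets of) R^n, defined as the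
   iterated product of the 1-dimensional Lebesgue measure:
   lebn 0 = Dirac mass at the unique point of R^0,
   lebn (n+1) A = \int lebn n (section of A at x) dx  (product measure). *)
Fixpoint lebn (n : nat) : set (n.-tuple R) -> \bar R :=
  match n return set (n.-tuple R) -> \bar R with
  | 0%N => fun A => (\1_A [tuple] : R)%:E
  | m.+1 => fun A =>
      (\int[@lebesgue_measure R]_x lebn [set t : m.-tuple R | A [tuple of x :: t]])%E
  end.

Definition lebRn (n : nat) (A : set 'rV[R]_n) : \bar R :=
  lebn (@to_row n @^-1` A).

Definition intRn (n : nat) (D : set 'rV[R]_n) (f : 'rV[R]_n -> \bar R) : \bar R :=
  (\int[@lebn n]_(x in @to_row n @^-1` D) f (@to_row n x))%E.

Definition measurableRn (n : nat) (f : 'rV[R]_n -> R) : Prop :=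
  measurable_fun [set: n.-tuple R] (f \o @to_row n).

Definition dotRn (n : nat) (u v : 'rV[R]_n) : R := \sum_i u 0 i * v 0 i.

Definition eball (n : nat) (x : 'rV[R]_n) (a : R) : set 'rV[R]_n :=
  [set y | dotRn (y - x) (y - x) <= a ^+ 2].

Definition dens_ratio (n : nat) (L : set 'rV[R]_n) (a : R) (x : 'rV[R]_n) : \bar R :=
  (counting (L `&` eball x a) * ((fine (lebRn (eball (0 : 'rV[R]_n) a)))^-1)%:E)%E.

Definition lower_density (n : nat) (L : set 'rV[R]_n) : \bar R :=
  ereal_sup [set ereal_inf [set ereal_inf [set dens_ratio L a x | x in [set: 'rV[R]_n]]
                           | a in [set a | b <= a]]
            | b in [set b : R | 0 < b]].

Definition upper_density (n : nat) (L : set 'rV[R]_n) : \bar R :=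
  ereal_inf [set ereal_sup [set ereal_sup [set dens_ratio L a x | x in [set: 'rV[R]_n]]
                           | a in [set a | b <= a]]
            | b in [set b : R | 0 < b]].

(* For F = Fr + i Fi : R^n -> C, the function
     f(x) = \int_S F(w) e^{2 pi i <w,x>} dw,
   i.e. the (continuous representative of the) inverse Fourier transform of F.
   These are its real and imaginary parts. *)
Definition pw_re (n : nat) (S : set 'rV[R]_n) (Fr Fi : 'rV[R]_n -> R) (x : 'rV[R]_n) : R :=
  fine (intRn S (fun w => (Fr w * cos (2 * pi * dotRn w x)
                         - Fi w * sin (2 * pi * dotRn w x))%:E)).

Definition pw_im (n : nat) (S : set 'rV[R]_n) (Fr Fi : 'rV[R]_n -> R) (x : 'rV[R]_n) : R :=
  fine (intRn S (fun w => (Fr w * sin (2 * pi * dotRn w x)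
                         + Fi w * cos (2 * pi * dotRn w x))%:E)).

Definition pw_abs2 (n : nat) (S : set 'rV[R]_n) (Fr Fi : 'rV[R]_n -> R) (x : 'rV[R]_n) : R :=
  pw_re S Fr Fi x ^+ 2 + pw_im S Fr Fi x ^+ 2.

(* F = Fr + i Fi is a (Borel representative of an) element of L^2(R^n)
   vanishing outside S; for compact S the functions f as above (with such F)
   are exactly the continuous representatives of the elements of B_S. *)
Definition L2_supported_in (n : nat) (S : set 'rV[R]_n) (Fr Fi : 'rV[R]_n -> R) : Prop :=
  [/\ measurableRn Fr, measurableRn Fi,
      (forall w, ~ S w -> Fr w = 0 /\ Fi w = 0) &
      (intRn [set: 'rV[R]_n] (fun w => (Fr w ^+ 2 + Fi w ^+ 2)%:E) < +oo)%E].

Definition stable_sampling (n : nat) (S : set 'rV[R]_n) (L : set 'rV[R]_n) (A B : R) : Prop :=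
  forall Fr Fi : 'rV[R]_n -> R, L2_supported_in S Fr Fi ->
    let nf := intRn [set: 'rV[R]_n] (fun x => (pw_abs2 S Fr Fi x)%:E) in
    let sm := (\esum_(l in L) (pw_abs2 S Fr Fi l)%:E)%E in
    (A%:E * nf <= sm)%E /\ (sm <= B%:E * nf)%E.

Definition universal_sampling (n : nat) (eta : R) (L : set 'rV[R]_n) : Prop :=
  [/\ lower_density L = eta%:E, upper_density L = eta%:E &
      forall S : set 'rV[R]_n, compact S -> (lebRn S < eta%:E)%E ->
        exists A B : R, [/\ 0 < A, A <= B & stable_sampling S L A B]].

Definition slice (n : nat) (Om : set 'rV[R]_(n + 1)) (t : R) : set 'rV[R]_n :=
  [set x | Om (row_mx x (t%:M : 'rV[R]_1))].

Definition convex_Rn (m : nat) (Om : set 'rV[R]_m) : Prop :=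
  forall x y (l : R), Om x -> Om y -> 0 <= l -> l <= 1 ->
    Om (l *: x + (1 - l) *: y).

End Defs.

(* Main.v *)
Require Import Defs.
From HB Require Import structures.
From mathcomp Require Import all_boot all_order all_algebra.
From mathcomp Require Import all_classical all_reals all_analysis.
From mathcomp Require Import measurable_realfun.

Import Order.TTheory GRing.Theory Num.Theory.
Import numFieldNormedType.Exports.

Local Open Scope classical_set_scope.
Local Open Scope ring_scope.

Set Implicit Arguments.
Unset Strict Implicit.
Unset Printing Implicit Defensive.

Section P1.
Variable R : realType.

Lemma mxn_entry_le m n (M : 'M[R]_(m, n)) i j : `|M i j| <= `|M|.
Proof.
rewrite [X in _ <= X]/Num.norm /= mx_normrE; apply/bigmax_geP; right; exists (i, j) => //.
Qed.

Lemma mxn_le_entries m n (M : 'M[R]_(m, n)) c : 0 <= c ->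
  (forall i j, `|M i j| <= c) -> `|M| <= c.
Proof.
move=> c0 H; rewrite /Num.norm /= mx_normrE; apply/bigmax_leP; split => // ij _; exact: H.
Qed.

Lemma lip_continuous a b c d (f : 'M[R]_(a, b) -> 'M[R]_(c, d)) :
  (forall y z, `|f y - f z| <= `|y - z|) -> continuous f.
Proof.
move=> Hf y; apply/(@cvgrPdist_lt _ _ _ (nbhs y) (nbhs_filter y)) => e e0.
near=> z; apply: le_lt_trans (Hf _ _) _.
near: z; exact: cvgr_dist_lt.
Unshelve. all: end_near. Qed.


Lemma lsubmx_cont a b c : continuous (@lsubmx R a b c).
Proof.
apply: lip_continuous => y z; rewrite -linearB /=.
apply: mxn_le_entries => // i j; rewrite mxE; exact: mxn_entry_le.
Qed.

Lemma rsubmx_cont a b c : continuous (@rsubmx R a b c).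
Proof.
apply: lip_continuous => y z; rewrite -linearB /=.
apply: mxn_le_entries => // i j; rewrite mxE; exact: mxn_entry_le.
Qed.

Lemma row_mxr_cont a b c (u : 'M[R]_(a, b)) : continuous (fun v : 'M[R]_(a, c) => row_mx u v).
Proof.
apply: lip_continuous => y z; rewrite opp_row_mx add_row_mx subrr.
apply: mxn_le_entries => // i j; rewrite mxE; case: splitP => k _.
  by rewrite mxE normr0.
exact: mxn_entry_le.
Qed.

Lemma row_mxl_cont a b c (v : 'M[R]_(a, c)) : continuous (fun u : 'M[R]_(a, b) => row_mx u v).
Proof.
apply: lip_continuous => y z; rewrite opp_row_mx add_row_mx subrr.
apply: mxn_le_entries => // i j; rewrite mxE; case: splitP => k _.
  exact: mxn_entry_le.
by rewrite mxE normr0.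
Qed.


Lemma near_sections (T Y : topologicalType) (C : set T) (p : T -> R) (q : T -> Y) :
  compact C -> continuous p -> continuous q -> forall (O : set Y), open O ->
  forall x, (forall y, C y -> p y = x -> O (q y)) ->
  \forall x' \near x, forall y, C y -> p y = x' -> O (q y).
Proof.
move=> cC cp cq O oO x H.
pose F := C `&` q @^-1` (~` O).
have cF : compact F.
  apply: compact_closedI => //; apply: preimage_closed.
    by move=> z _; exact: cq.
  by rewrite closedC.
have cP : compact (p @` F) by apply: continuous_compact => //; exact: continuous_subspaceT.
have clP : closed (p @` F) by apply: compact_closed => //; exact: Rhausdorff.
have nPx : (~` (p @` F)) x.
  by case=> y [Cy nOqy] pyx; apply: nOqy; exact: H.
have : nbhs x (~` (p @` F)) by move: (closed_openC clP); rewrite openE => /(_ x nPx).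
apply: filterS => x' nP y Cy pyx'; apply: contrapT => nO; apply: nP; exists y => //.
Qed.


Lemma mx_set1_closed a b (u : 'M[R]_(a, b)) : closed [set u].
Proof. apply: compact_closed; [exact: norm_hausdorff | exact: compact_set1]. Qed.

Lemma secr_compact a b c (C : set 'M[R]_(a, b + c)) (u : 'M[R]_(a, b)) :
  compact C -> compact [set r : 'M[R]_(a, c) | C (row_mx u r)].
Proof.
move=> cC.
have -> : [set r : 'M[R]_(a, c) | C (row_mx u r)] =
    rsubmx @` (C `&` lsubmx @^-1` [set u]).
  apply/seteqP; split => [r Cr|_ [y [Cy /= <-] <-]].
    by exists (row_mx u r); rewrite /= ?row_mxKl ?row_mxKr.
  by rewrite /= hsubmxK.
apply: continuous_compact; first exact/continuous_subspaceT/rsubmx_cont.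
apply: compact_closedI => //; apply: preimage_closed; last exact: mx_set1_closed.
by move=> z _; exact: lsubmx_cont.
Qed.

Lemma secl_compact a b c (C : set 'M[R]_(a, b + c)) (u : 'M[R]_(a, c)) :
  compact C -> compact [set r : 'M[R]_(a, b) | C (row_mx r u)].
Proof.
move=> cC.
have -> : [set r : 'M[R]_(a, b) | C (row_mx r u)] =
    lsubmx @` (C `&` rsubmx @^-1` [set u]).
  apply/seteqP; split => [r Cr|_ [y [Cy /= <-] <-]].
    by exists (row_mx r u); rewrite /= ?row_mxKl ?row_mxKr.
  by rewrite /= hsubmxK.
apply: continuous_compact; first exact/continuous_subspaceT/lsubmx_cont.
apply: compact_closedI => //; apply: preimage_closed; last exact: mx_set1_closed.
by move=> z _; exact: rsubmx_cont.
Qed.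


Definition thick n (K : set 'rV[R]_n) (e : R) :=
  [set y | exists2 x, K x & `|y - x| <= e].
Definition othick n (K : set 'rV[R]_n) (e : R) :=
  [set y | exists2 x, K x & `|y - x| < e].

Lemma cball_compact n (e : R) : compact [set v : 'rV[R]_n | `|v| <= e].
Proof.
apply: bounded_closed_compact.
  have : \forall M \near +oo, e <= M by apply: nbhs_pinfty_ge; exact: num_real.
  by apply: filterS => M eM v /= hv; exact: le_trans hv eM.
have -> : [set v : 'rV[R]_n | `|v| <= e] = (fun v : 'rV[R]_n => `|v|) @^-1` [set x : R | x <= e] by [].
apply: preimage_closed; last exact: closed_le.
by move=> z _; exact: norm_continuous.
Qed.

Lemma thick_compact n (K : set 'rV[R]_n) e : compact K -> compact (thick K e).
Proof.
move=> cK.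
have -> : thick K e = (fun z => z.1 + z.2) @` (K `*` [set v | `|v| <= e]).
  apply/seteqP; split => [y [x Kx hy]|_ [[x v] [/= Kx hv] <-]].
    by exists (x, y - x) => //=; rewrite addrC subrK.
  by exists x => //; rewrite addrAC subrr add0r.
apply: continuous_compact; first exact/continuous_subspaceT/add_continuous.
by apply: compact_setX => //; exact: cball_compact.
Qed.

Lemma othick_open n (K : set 'rV[R]_n) e : open (othick K e).
Proof.
rewrite openE => y [x Kx hy]; rewrite /interior.
apply/nbhs_ballP; exists (e - `|y - x|); first by rewrite /= subr_gt0.
move=> z /= hz; exists x => //.
rewrite -[z](subrK y) -addrA.
apply: (le_lt_trans (ler_normD _ _)).
rewrite -ltrBrDr; move: hz; rewrite -ball_normE /ball_ /=.
by rewrite -normrN opprB.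
Qed.

Lemma othick_sub n (K : set 'rV[R]_n) e : othick K e `<=` thick K e.
Proof. by move=> y [x Kx /ltW]; exists x. Qed.

Lemma sub_othick n (K : set 'rV[R]_n) e : 0 < e -> K `<=` othick K e.
Proof. by move=> e0 x Kx; exists x => //; rewrite subrr normr0. Qed.

Lemma thick_le n (K : set 'rV[R]_n) e e' : e <= e' -> thick K e `<=` thick K e'.
Proof. by move=> ee y [x Kx h]; exists x => //; exact: le_trans ee. Qed.

Lemma bigcap_thick n (K : set 'rV[R]_n) : closed K ->
  \bigcap_k thick K (k.+1%:R^-1) = K.
Proof.
move=> clK; apply/seteqP; split; last first.
  by move=> x Kx k _; exists x => //; rewrite subrr normr0 invr_ge0.
move=> y Hy; rewrite (closure_id K).1 //.
move=> B /nbhs_ballP [r r0 rB].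
have [k hk] : exists k : nat, k.+1%:R^-1 < r.
  exists (Num.truncn r^-1); rewrite invf_plt ?posrE ?ltr0Sn //; exact: truncnS_gt.
have [x Kx hx] := Hy k I.
exists x; split => //; apply: rB; rewrite -ball_normE /ball_ /=.
exact: le_lt_trans hx hk.
Qed.

End P1.

Section P2.
Variable R : realType.
Local Notation leb := (@lebesgue_measure R).

Lemma to_row_cons m (x : R) (t : m.-tuple R) :
  to_row [tuple of x :: t] = (row_mx (x%:M : 'rV[R]_1) (to_row t) : 'rV[R]_(1 + m)).
Proof.
apply/rowP => i; rewrite !mxE; case: splitP => j hj.
  by rewrite (tnth_nth x) /= hj ord1 !mxE eqxx mulr1n.
by rewrite mxE !(tnth_nth x) /= hj.
Qed.

Lemma lebn_ge0 n (A : set (n.-tuple R)) : (0 <= lebn A)%E.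
Proof.
elim: n A => [|m IH] A /=; first by rewrite lee_fin indicE.
by apply: integral_ge0 => x _.
Qed.

Lemma lebn0 n : lebn (set0 : set (n.-tuple R)) = 0%E.
Proof.
elim: n => [|m IH] /=; first by rewrite indic0.
transitivity (\int[leb]_x (cst 0%E) x)%E; last exact: integral0.
by apply: eq_integral => x _ /=; rewrite -IH; congr lebn.
Qed.

Lemma lebRn_ge0 n (A : set 'rV[R]_n) : (0 <= lebRn A)%E.
Proof. exact: lebn_ge0. Qed.

Lemma lebRn0 n : lebRn (set0 : set 'rV[R]_n) = 0%E.
Proof. by rewrite /lebRn preimage_set0 lebn0. Qed.

Definition sec m (C : set 'rV[R]_(1 + m)) (x : R) : set 'rV[R]_m :=
  [set r | C (row_mx x%:M r)].

Lemma lebRnS m (C : set 'rV[R]_(1 + m)) :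
  lebRn C = (\int[leb]_x lebRn (sec C x))%E.
Proof.
rewrite /lebRn /=; apply: eq_integral => x _.
congr lebn; apply/seteqP; split => t /=; by rewrite to_row_cons.
Qed.

End P2.

Section P3.
Variable R : realType.
Local Notation leb := (@lebesgue_measure R).

Definition Pfin n := forall C : set 'rV[R]_n, compact C -> (lebRn C < +oo)%E.
Definition Pmono n := forall A B : set 'rV[R]_n, compact A -> compact B ->
  A `<=` B -> (lebRn A <= lebRn B)%E.
Definition Pcont n := forall C_ : nat -> set 'rV[R]_n, (forall k, compact (C_ k)) ->
  (forall k, C_ k.+1 `<=` C_ k) ->
  lebRn (C_ k) @[k --> \oo] --> lebRn (\bigcap_k C_ k).

Lemma inv_succ_le (k : nat) : k.+2%:R^-1 <= k.+1%:R^-1 :> R.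
Proof. by rewrite lef_pV2 ?posrE ?ltr0Sn // ler_nat. Qed.

Lemma inv_succ_gt0 (k : nat) : 0 < k.+1%:R^-1 :> R.
Proof. by rewrite invr_gt0 ltr0Sn. Qed.

Lemma thick_seq_cvg n (K : set 'rV[R]_n) : Pcont n -> compact K ->
  lebRn (thick K k.+1%:R^-1) @[k --> \oo] --> lebRn K.
Proof.
move=> Hc cK.
have := Hc (fun k => thick K k.+1%:R^-1) (fun k => thick_compact cK)
  (fun k => thick_le (inv_succ_le k)).
by rewrite bigcap_thick //; apply: compact_closed => //; exact: norm_hausdorff.
Qed.

Lemma thick_small n (K : set 'rV[R]_n) (b : \bar R) : Pcont n -> compact K ->
  (lebRn K < b)%E -> exists k : nat, (lebRn (thick K k.+1%:R^-1) < b)%E.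
Proof.
move=> Hc cK Kb.
have := thick_seq_cvg Hc cK.
move=> /(_ [set y | (y < b)%E]); rewrite /= => H.
have /H : nbhs (lebRn K) [set y | (y < b)%E].
  by apply: open_nbhs_nbhs; split => //; exact: open_ereal_lt_ereal.
move=> hk; have hk2 : \forall k \near \oo, (lebRn (thick K k.+1%:R^-1) < b)%E := hk.
by have [k hk3] := filter_ex hk2; exists k.
Qed.

Section step.
Variable m : nat.
Hypotheses (IHf : Pfin m) (IHm : Pmono m) (IHc : Pcont m).

Lemma lsub00 (y : 'rV[R]_(1 + m)) : y = row_mx ((lsubmx y) 0 0)%:M (rsubmx y).
Proof. by rewrite -mx11_scalar hsubmxK. Qed.

Lemma p_cont : continuous (fun y : 'rV[R]_(1 + m) => (lsubmx y) 0 0).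
Proof.
move=> y; apply: (@continuous_comp _ _ _ lsubmx (fun M : 'M[R]_(1, 1) => M 0 0)).
  exact: lsubmx_cont.
exact: coord_continuous.
Qed.

Lemma sec_meas (C : set 'rV[R]_(1 + m)) : compact C ->
  measurable_fun [set: R] (fun x : R => (lebRn (sec C x) : \bar R)).

Proof.
move=> cC.
pose g := fun x => lebRn (sec C x).
have lsc : lower_semicontinuous (fun x => - g x)%E.
  move=> x a hx.
  have gxa : (g x < (- a)%:E)%E by rewrite EFinN -lteNr.
  pose S := sec C x.
  have cS : compact S by exact: secr_compact.
  have [k hk] := thick_small IHc cS gxa.
  pose O := othick S k.+1%:R^-1.
  have H : forall y, C y -> (lsubmx y) 0 0 = x -> O (rsubmx y).
    move=> y Cy hy; apply: sub_othick; first exact: inv_succ_gt0.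
    by rewrite /S /sec /= -hy -lsub00.
  have := near_sections cC p_cont (@rsubmx_cont _ _ _ _) (@othick_open _ _ S k.+1%:R^-1) H.
  move=> Hn; exists [set x' | (a%:E < - g x')%E] => //.
  apply: filterS Hn => x' Hx'.
  have sub : sec C x' `<=` thick S k.+1%:R^-1.
    move=> r Cr; apply: othick_sub; have := Hx' _ Cr.
    by rewrite row_mxKl row_mxKr mxE eqxx mulr1n; apply.
  rewrite /= lteNr -EFinN; apply: le_lt_trans hk.
  by apply: IHm => //; [exact: secr_compact | exact: thick_compact].
have := lower_semicontinuous_measurable lsc.
move=> mg; rewrite (_ : (fun x => lebRn (sec C x)) = (fun x => - (- g x)))%E.
  by apply: measurableT_comp => //; exact: oppe_measurable.
by apply/funext => x; rewrite oppeK.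
Qed.


Lemma sec_sub_proj (C : set 'rV[R]_(1 + m)) x : sec C x `<=` rsubmx @` C.
Proof. by move=> r Cr; exists (row_mx x%:M r) => //; rewrite row_mxKr. Qed.

Lemma sec_empty (C : set 'rV[R]_(1 + m)) x :
  ~ ((fun y => (lsubmx y) 0 0) @` C) x -> sec C x = set0.
Proof.
move=> nP; apply/seteqP; split => // r Cr; apply: nP.
by exists (row_mx x%:M r) => //; rewrite row_mxKl mxE eqxx mulr1n.
Qed.

Lemma compactR_finite (P : set R) : compact P -> (leb P < +oo)%E.
Proof.
move=> cP.
have : exists r : R, forall x, P x -> `|x| <= r.
  case: (compact_bounded cP) => M [_ HM]; exists (M + 1); apply: HM; by rewrite ltrDl.
case=> r hr.
have mP : measurable P by apply: closed_measurable; apply: compact_closed => //; exact: Rhausdorff.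
apply: (@le_lt_trans _ _ (leb `[- r, r]%classic)).
  apply: le_measure; [by rewrite inE|by rewrite inE|].
  by move=> x Px; rewrite /= in_itv /= -ler_norml; exact: hr.
rewrite lebesgue_measure_itv /=; case: ifP => _; last exact: ltey.
by rewrite -EFinD ltey.
Qed.

Lemma fin_step : Pfin (1 + m).
Proof.
move=> C cC; rewrite lebRnS.
pose P := (fun y => (lsubmx y) 0 0) @` C.
have cP : compact P by apply: continuous_compact => //; exact/continuous_subspaceT/p_cont.
have mP : measurable P by apply: closed_measurable; apply: compact_closed => //; exact: Rhausdorff.
have cQ : compact (rsubmx @` C).
  by apply: continuous_compact => //; exact/continuous_subspaceT/rsubmx_cont.
pose M := lebRn (rsubmx @` C).
have Mfin : M \is a fin_num by rewrite ge0_fin_numE ?lebRn_ge0 //; exact: IHf.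
have gle x : (lebRn (sec C x) <= M)%E.
  by apply: IHm => //; [exact: secr_compact | exact: sec_sub_proj].
have -> : (\int[leb]_x lebRn (sec C x) = \int[leb]_(x in P) lebRn (sec C x))%E.
  rewrite [RHS]integral_mkcond; apply: eq_integral => x _.
  rewrite /patch; case: ifPn => // /negP; rewrite in_setE => nP.
  by rewrite sec_empty // lebRn0.
apply: (@le_lt_trans _ _ (\int[leb]_(x in P) (cst M) x)%E).
  apply: ge0_le_integral => //.
  - by move=> x _; exact: lebRn_ge0.
  - by apply: measurable_funS (sec_meas cC).
rewrite integral_cst //; apply: lte_mul_pinfty => //; first exact: lebRn_ge0.
exact: compactR_finite.
Qed.


Lemma mono_step : Pmono (1 + m).
Proof.
move=> A B cA cB AB; rewrite !lebRnS; apply: ge0_le_integral => //.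
- by move=> x _; exact: lebRn_ge0.
- exact: sec_meas cA.
- exact: sec_meas cB.
- move=> x _; apply: IHm; [exact: secr_compact|exact: secr_compact|].
  by move=> r; apply: AB.
Qed.

Lemma dec_le (T : Type) (C_ : nat -> set T) : (forall k, C_ k.+1 `<=` C_ k) ->
  forall k, C_ k `<=` C_ 0%N.
Proof.
move=> dC; elim=> [//|k IH]; exact: subset_trans (dC k) IH.
Qed.

Lemma cont_step : Pcont (1 + m).
Proof.
move=> C_ cC dC.
have -> : (fun k => lebRn (C_ k)) = (fun k => \int[leb]_x lebRn (sec (C_ k) x))%E.
  by apply/funext => k; exact: lebRnS.
rewrite lebRnS.
apply: (@dominated_cvg _ _ _ leb setT measurableT
  (fun k x => lebRn (sec (C_ k) x)) (fun x => lebRn (sec (\bigcap_k C_ k) x))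
  (fun x => lebRn (sec (C_ 0%N) x))).
- by move=> k; exact: sec_meas.
- move=> x _.
  have -> : sec (\bigcap_k C_ k) x = \bigcap_k sec (C_ k) x.
    by apply/seteqP; split.
  apply: IHc; first by move=> k; exact: secr_compact.
  by move=> k r; apply: dC.
- move=> x _; rewrite ge0_fin_numE ?lebRn_ge0 //; apply: IHf; exact: secr_compact.
- apply/integrableP; split; first exact: sec_meas.
  under eq_integral => x _ do rewrite gee0_abs ?lebRn_ge0 //.
  by rewrite -lebRnS; exact: fin_step.
- move=> k x _; rewrite gee0_abs ?lebRn_ge0 //.
  apply: IHm; [exact: secr_compact|exact: secr_compact|].
  by move=> r; apply: (dec_le dC).
Qed.

End step.
End P3.

Section P4.
Variable R : realType.

Lemma lebRn0E (A : set 'rV[R]_0) :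
  lebRn A = ((to_row [tuple] \in A)%:R : R)%:E.
Proof. by rewrite /lebRn /= indicE; congr (_%:R%:E); apply/idP/idP; rewrite !inE. Qed.

Lemma dec_le2 (T : Type) (C_ : nat -> set T) : (forall k, C_ k.+1 `<=` C_ k) ->
  forall i j, (i <= j)%N -> C_ j `<=` C_ i.
Proof.
move=> dC i j /subnK <-; elim: (j - i)%N => [|d IH]; first by rewrite add0n.
by rewrite addSn; exact: subset_trans (dC _) IH.
Qed.

Lemma base0 : Pfin R 0 /\ Pmono R 0 /\ Pcont R 0.
Proof.
split; [|split].
- by move=> C _; rewrite lebRn0E ltey.
- move=> A B _ _ AB; rewrite !lebRn0E lee_fin.
  case: (boolP (_ \in A)) => hA; last by rewrite ler0n.
  by have -> : to_row [tuple] \in B by rewrite inE; apply: AB; rewrite -inE.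
- move=> C_ _ dC; rewrite lebRn0E; apply: cvg_near_cst.
  case: (boolP (_ \in \bigcap_k C_ k)) => h.
apply: nearW => k; rewrite lebRn0E.
    by have -> : to_row [tuple] \in C_ k by move: h; rewrite !inE => /(_ k I).
  have [k0 hk0] : exists k0, ~ C_ k0 (to_row [tuple]).
    apply: contrapT => H; move/negP: h; apply; rewrite inE => k _.
    by apply: contrapT => hk; apply: H; exists k.
  near=> k; rewrite lebRn0E.
  suff -> : (to_row [tuple] \in C_ k) = false by [].
  apply/negP; rewrite inE => hk; apply: hk0.
  have hle : (k0 <= k)%N by near: k; exact: nbhs_infty_ge.
  exact: (dec_le2 dC hle hk).
Unshelve. all: end_near. Qed.


Lemma allP n : Pfin R n /\ Pmono R n /\ Pcont R n.
Proof.
elim: n => [|m [f [mo c]]]; first exact: base0.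
split; [exact: fin_step|split; [exact: mono_step|exact: cont_step]].
Qed.

End P4.

Section P5.
Variable R : realType.

Lemma intRn_patch n (D D' : set 'rV[R]_n) (f : 'rV[R]_n -> \bar R) :
  (forall w, D' w -> ~ D w -> f w = 0%E) -> D `<=` D' ->
  intRn D f = intRn D' f.
Proof.
move=> f0 DD; rewrite /intRn /integral.
have -> : (fun x => f (@to_row R n x)) \_ (@to_row R n @^-1` D) =
          (fun x => f (@to_row R n x)) \_ (@to_row R n @^-1` D').
  apply/funext => x; rewrite /patch.
  case: ifPn => hD; case: ifPn => hD' //.
  - by exfalso; move/negP: hD'; apply; move: hD; rewrite !inE => /DD.
  - rewrite f0 //; first by move: hD'; rewrite inE.
    by move: hD; rewrite notin_setE.
by [].
Qed.

Lemma L2_mono n (S S' : set 'rV[R]_n) Fr Fi : S `<=` S' ->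
  L2_supported_in S Fr Fi -> L2_supported_in S' Fr Fi.
Proof.
move=> SS [m1 m2 h0 hi]; split => // w nS'; apply: h0 => /SS; exact: nS'.
Qed.

Lemma pw_abs2_mono n (S S' : set 'rV[R]_n) Fr Fi : S `<=` S' ->
  L2_supported_in S Fr Fi -> pw_abs2 S Fr Fi = pw_abs2 S' Fr Fi.
Proof.
move=> SS [_ _ h0 _]; apply/funext => x.
rewrite /pw_abs2 /pw_re /pw_im.
rewrite (@intRn_patch _ S S') //; last first.
  by move=> w _ /h0 [-> ->]; rewrite !mul0r subr0.
rewrite (@intRn_patch _ S S' (fun w => (Fr w * sin _ + Fi w * cos _)%:E)) //.
by move=> w _ /h0 [-> ->]; rewrite !mul0r addr0.
Qed.

Lemma weaken_bounds (nf sm : \bar R) (A B A' B' : R) : (0 <= nf)%E ->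
  0 <= A' -> A' <= A -> B <= B' ->
  (A%:E * nf <= sm)%E -> (sm <= B%:E * nf)%E ->
  (A'%:E * nf <= sm)%E /\ (sm <= B'%:E * nf)%E.
Proof.
move=> nf0 A'0 AA BB h1 h2; split.
  by apply: le_trans h1; apply: lee_wpmul2r => //; rewrite lee_fin.
by apply: (le_trans h2); apply: lee_wpmul2r => //; rewrite lee_fin.
Qed.

Definition NF n (S : set 'rV[R]_n) Fr Fi :=
  intRn [set: 'rV[R]_n] (fun x => (pw_abs2 S Fr Fi x)%:E).
Definition SM n (S L : set 'rV[R]_n) Fr Fi :=
  (\esum_(l in L) (pw_abs2 S Fr Fi l)%:E)%E.

Lemma ssE n (S L : set 'rV[R]_n) A B : stable_sampling S L A B <->
  forall Fr Fi, L2_supported_in S Fr Fi ->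
  (A%:E * NF S Fr Fi <= SM S L Fr Fi)%E /\ (SM S L Fr Fi <= B%:E * NF S Fr Fi)%E.
Proof. by []. Qed.

Lemma SM_ge0 n (S L : set 'rV[R]_n) Fr Fi : (0 <= SM S L Fr Fi)%E.
Proof.
rewrite /SM; apply: esum_ge0 => x _; rewrite lee_fin /pw_abs2.
by rewrite addr_ge0 // sqr_ge0.
Qed.

Lemma ss_mono n (S S' : set 'rV[R]_n) L A B A' B' : S `<=` S' ->
  stable_sampling S' L A B -> 0 < B -> 0 <= A' -> A' <= A -> B <= B' ->
  stable_sampling S L A' B'.
Proof.
move=> SS /ssE hs B0 A'0 AA BB; apply/ssE => Fr Fi hL.
have [h1 h2] := hs Fr Fi (L2_mono SS hL).
have e1 : NF S Fr Fi = NF S' Fr Fi by rewrite /NF (pw_abs2_mono SS hL).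
have e2 : SM S L Fr Fi = SM S' L Fr Fi by rewrite /SM (pw_abs2_mono SS hL).
have nf0 : (0 <= NF S' Fr Fi)%E.
  by rewrite -(@pmule_rge0 _ B%:E) ?lte_fin //; exact: le_trans (SM_ge0 _ _ _ _) h2.
rewrite e1 e2; exact: (weaken_bounds nf0 A'0 AA BB h1 h2).
Qed.

End P5.

Section P6.
Variable R : realType.

Lemma pcont_last n : continuous (fun y : 'rV[R]_(n + 1) => (rsubmx y) 0 0).
Proof.
move=> y; apply: (@continuous_comp _ _ _ rsubmx (fun M : 'M[R]_(1, 1) => M 0 0)).
  exact: rsubmx_cont.
exact: coord_continuous.
Qed.

Lemma near0_bounds (A B : R) : 0 < A -> A <= B ->
  \forall i \near 0^'+, [/\ 0 < i, i <= A, B <= i^-1 & i <= 1].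
Proof.
move=> A0 AB; have B0 : 0 < B by exact: lt_le_trans AB.
near=> i.
have i0 : 0 < i by near: i; exact: nbhs_right_gt.
split => //.
- by near: i; exact: nbhs_right_le.
- have : i <= B^-1 by near: i; apply: nbhs_right_le; rewrite invr_gt0.
  by rewrite -[X in X <= _ -> _](invrK i) lef_pV2 ?posrE ?invr_gt0.
- by near: i; exact: nbhs_right_le.
Unshelve. all: end_near. Qed.

End P6.

Unset Implicit Arguments.

Theorem proposition3p10 (R : realType) (n : nat)
    (Om : set 'rV[R]_(n + 1)) (eta : R) (L : set 'rV[R]_n) :
  convex_Rn Om -> compact Om ->
  (ereal_sup [set lebRn (slice Om t) | t in [set: R]] < eta%:E)%E ->
  0 < eta ->
  universal_sampling eta L ->
  exists A B : R, [/\ 0 < A, A <= B &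
    forall t : R, stable_sampling (slice Om t) L A B].
Proof.
move=> _ cOm hsup eta0 [_ _ HU].
have [_ [_ Pc]] := allP R n.
have [A0 [B0 [A00 AB0 hs0]]] : exists A B : R, [/\ 0 < A, A <= B &
    stable_sampling (set0 : set 'rV[R]_n) L A B].
  by apply: HU; [exact: compact0 | rewrite lebRn0 lte_fin].
have cS t : compact (slice Om t) by exact: secl_compact.
have lS t : (lebRn (slice Om t) < eta%:E)%E.
  by apply: le_lt_trans hsup; apply: ereal_sup_ubound; exists t.
have loc (t : R) : exists A B : R, [/\ 0 < A, A <= B &
    \forall t' \near t, stable_sampling (slice Om t') L A B].
  have [k hk] := thick_small Pc (cS t) (lS t).
  have [A [B [Ap AB hs]]] := HU _ (thick_compact (cS t)) hk.
  exists A, B; split => //.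
  have H : forall y, Om y -> (rsubmx y) 0 0 = t ->
      othick (slice Om t) k.+1%:R^-1 (lsubmx y).
    move=> y Oy hy; apply: sub_othick; first exact: inv_succ_gt0.
    by rewrite /slice /= -hy -mx11_scalar hsubmxK.
  have := near_sections cOm (@pcont_last R n) (@lsubmx_cont _ _ _ _)
    (@othick_open _ _ (slice Om t) k.+1%:R^-1) H.
  apply: filterS => t' Ht'.
  have sub : slice Om t' `<=` thick (slice Om t) k.+1%:R^-1.
    move=> x Sx; apply: othick_sub; have := Ht' _ Sx.
    by rewrite row_mxKl row_mxKr mxE eqxx mulr1n; apply.
  exact: (ss_mono sub hs (lt_le_trans Ap AB) (ltW Ap) (lexx A) (lexx B)).
pose P := (fun y : 'rV[R]_(n + 1) => (rsubmx y) 0 0) @` Om.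
have cP : compact P.
  by apply: continuous_compact => //; exact/continuous_subspaceT/pcont_last.
pose Q i t := stable_sampling (slice Om t) L i i^-1.
have cov : \forall i \near 0^'+, P `<=` Q i.
  apply: ((compact_near_coveringP P).1 cP R (0^'+) Q).

  
  move=> t _; have [A [B [Ap AB hn]]] := loc t.
  exists ([set t' | stable_sampling (slice Om t') L A B],
          [set i : R | [/\ 0 < i, i <= A, B <= i^-1 & i <= 1]]).
    by split; [exact: hn | exact: (@near0_bounds R _ _ Ap AB)].
  move=> [t' i] [/= h1 [i0 iA Bi _]].
  exact: (ss_mono (@subset_refl _ _) h1 (lt_le_trans Ap AB) (ltW i0) iA Bi).
have hall : \forall i \near 0^'+, (forall t, Q i t) /\ 0 < i /\ i <= 1.
  move: (@near0_bounds R _ _ A00 AB0) cov; apply: filterS2 => i [i0 iA Bi i1] covi.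
  split => //; move=> t; case: (pselect (P t)) => Pt.
    exact: covi.
  have sub : slice Om t `<=` set0.
    move=> x Sx; apply: Pt; exists (row_mx x t%:M) => //.
    by rewrite row_mxKr mxE eqxx mulr1n.
  exact: (ss_mono sub hs0 (lt_le_trans A00 AB0) (ltW i0) iA Bi).
have [i [hQ [i0 i1]]] := @filter_ex _ _ (at_right_proper_filter (0 : R)) _ hall.
exists i, i^-1; split => //.
by apply: (le_trans i1); rewrite invf_ge1.
Unshelve. all: end_near. Qed.
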